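(* Fix total velocities $(\overline{u}_{T,k+1/2})_{k=1}^4\in\mathbb{R}^4$. Then for each phase $\ell\in\{w,\textit{nw}\}$, each $k\in\{1,\dots,4\}$ and each $j\in\{1,\dots,4\}$ with $j\neq k$, $$\frac{\partial\big(\overline{V}_{\ell,k+1/2}-\overline{V}_{\ell,k-1/2}\big)}{\partial S_{\ell,j}}\le 0 .$$
   Context: Indices in $\{1,2,3,4\}$ are cyclic mod 4 (vertices of an interaction region, labeled counterclockwise; half-interface $k+1/2$ joins vertex $k$ to vertex $k+1$, and $\overline{u}_{T,k+1/2}>0$ means flow from $k$ to $k+1$). $S_j$ is the wetting saturation at vertex $j$; $S_{w,j}=S_j$, $S_{\textit{nw},j}=1-S_j$, so $\partial/\partial S_{\textit{nw},j}=-\partial/\partial S_j$. Mobilities $\lambda_w,\lambda_{\textit{nw}}$ are positive differentiable functions of $S$, with $\lambda_w$ nondecreasing and $\lambda_{\textit{nw}}$ nonincreasing in $S$; $\lambda_T=\lambda_w+\lambda_{\textit{nw}}$; $\chi_{\ell,j}=\lambda_\ell(S_j)/\lambda_T(S_j)$, $\boldsymbol{\chi}_\ell=(\chi_{\ell,1},\dots,\chi_{\ell,4})^T$. Limiter $\varphi(r)=\dfrac{r^4+r^3+r^2+r}{r^4+r^3+r^2+r+1}$, $r\ge0$. $\overline{\omega}^V_{k+1/2}=\varphi(\max(0,\overline{u}_{T,k-1/2}/\overline{u}_{T,k+1/2}))$ if $\overline{u}_{T,k+1/2}>0$, $=\varphi(\max(0,\overline{u}_{T,k+3/2}/\overline{u}_{T,k+1/2}))$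 if $\overline{u}_{T,k+1/2}<0$, $=0$ otherwise. $\boldsymbol{A}$: $a_{kk}=1$, $a_{k,k-1}=-\overline{\omega}^V_{k+1/2}$ if $\overline{u}_{T,k+1/2}\ge0$ (else $0$), $a_{k,k+1}=-\overline{\omega}^V_{k+1/2}$ if $\overline{u}_{T,k+1/2}<0$ (else $0$), other entries $0$. $\boldsymbol{B}$: $b_{kk}=1-\overline{\omega}^V_{k+1/2}$ if $\overline{u}_{T,k+1/2}\ge0$ (else $0$), $b_{k,k+1}=1-\overline{\omega}^V_{k+1/2}$ if $\overline{u}_{T,k+1/2}<0$ (else $0$), other entries $0$. The interfacial mobility ratios are $\overline{\boldsymbol{\chi}}_\ell=\boldsymbol{A}^{-1}\boldsymbol{B}\boldsymbol{\chi}_\ell$ with entries $\overline{\chi}_{\ell,k+1/2}$, and the viscous flux is $\overline{V}_{\ell,k+1/2}=\overline{\chi}_{\ell,k+1/2}\overline{u}_{T,k+1/2}$. The total velocities (hence $\boldsymbol{A},\boldsymbol{B}$) are held fixed when differentiating. *)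

(* Defs.v *)
From Stdlib Require Import Reals Lra.
Open Scope R_scope.

(* Indices: vertex 1..4 of the paper is 0..3 here, cyclic mod 4.
   Interface k (0<=k<4) is the half-interface "k+1/2" joining vertex k
   to vertex (k+1) mod 4; u k is  \overline{u}_{T,k+1/2}. *)
Definition prv (k : nat) : nat := (k + 3) mod 4.
Definition nxt (k : nat) : nat := (k + 1) mod 4.

Definition sum4 (f : nat -> R) : R := f 0%nat + f 1%nat + f 2%nat + f 3%nat.

Definition phi (r : R) : R :=
  (r ^ 4 + r ^ 3 + r ^ 2 + r) / (r ^ 4 + r ^ 3 + r ^ 2 + r + 1).

Definition omegaV (u : nat -> R) (k : nat) : R :=
  if Rlt_dec 0 (u k) then phi (Rmax 0 (u (prv k) / u k))
  else if Rlt_dec (u k) 0 then phi (Rmax 0 (u (nxt k) / u k))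
  else 0.

Definition matA (u : nat -> R) (k i : nat) : R :=
  if Nat.eqb i k then 1
  else if Rle_dec 0 (u k) then (if Nat.eqb i (prv k) then - omegaV u k else 0)
  else (if Nat.eqb i (nxt k) then - omegaV u k else 0).

Definition matB (u : nat -> R) (k i : nat) : R :=
  if Rle_dec 0 (u k) then (if Nat.eqb i k then 1 - omegaV u k else 0)
  else (if Nat.eqb i (nxt k) then 1 - omegaV u k else 0).

Definition det3 (m : nat -> nat -> R) (r0 r1 r2 c0 c1 c2 : nat) : R :=
  m r0 c0 * (m r1 c1 * m r2 c2 - m r1 c2 * m r2 c1)
  - m r0 c1 * (m r1 c0 * m r2 c2 - m r1 c2 * m r2 c0)
  + m r0 c2 * (m r1 c0 * m r2 c1 - m r1 c1 * m r2 c0).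

(* oth i p = p-th (p=0,1,2) element of {0,1,2,3} \ {i}, increasing *)
Definition oth (i p : nat) : nat := if Nat.ltb p i then p else S p.

Definition cofactor4 (m : nat -> nat -> R) (i j : nat) : R :=
  (-1) ^ (i + j) *
  det3 m (oth i 0) (oth i 1) (oth i 2) (oth j 0) (oth j 1) (oth j 2).

Definition det4 (m : nat -> nat -> R) : R :=
  sum4 (fun j => m 0%nat j * cofactor4 m 0 j).

Definition inv4 (m : nat -> nat -> R) (i j : nat) : R :=
  cofactor4 m j i / det4 m.

Inductive phase := w | nw.

Definition mob (lw lnw : R -> R) (l : phase) : R -> R :=
  match l with w => lw | nw => lnw end.

Definition chi (lw lnw : R -> R) (l : phase) (S : nat -> R) (j : nat) : R :=
  mob lw lnw l (S j) / (lw (S j) + lnw (S j)).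

Definition chibar (u : nat -> R) (lw lnw : R -> R) (l : phase)
  (S : nat -> R) (k : nat) : R :=
  sum4 (fun i => inv4 (matA u) k i *
                 sum4 (fun m => matB u i m * chi lw lnw l S m)).

Definition Vbar (u : nat -> R) (lw lnw : R -> R) (l : phase)
  (S : nat -> R) (k : nat) : R :=
  chibar u lw lnw l S k * u k.

Definition upd (S : nat -> R) (j : nat) (s : R) : nat -> R :=
  fun m => if Nat.eqb m j then s else S m.

(* phase saturation at vertex j: S_{w,j} = S_j, S_{nw,j} = 1 - S_j;
   wet_of l x recovers S_j from S_{l,j} = x *)
Definition wet_of (l : phase) (x : R) : R :=
  match l with w => x | nw => 1 - x end.
Definition phase_sat (l : phase) (Sj : R) : R :=
  match l with w => Sj | nw => 1 - Sj end.

(* Main.v *)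
Require Import Defs.
From Stdlib Require Import Reals Lra Lia.
Open Scope R_scope.

Lemma cof_id M i n : (i<4)%nat -> (n<4)%nat ->
  sum4 (fun p => M i p * cofactor4 M n p) = if Nat.eqb i n then det4 M else 0.
Proof.
  intros Hi Hn.
  destruct i as [|[|[|[|i]]]]; try lia; destruct n as [|[|[|[|n]]]]; try lia;
  unfold det4, sum4, cofactor4, det3, oth; simpl; ring.
Qed.

Lemma inv_id M i n : det4 M <> 0 -> (i<4)%nat -> (n<4)%nat ->
  sum4 (fun m => M i m * inv4 M m n) = if Nat.eqb i n then 1 else 0.
Proof.
  intros Hd Hi Hn.
  assert (E: sum4 (fun m => M i m * inv4 M m n)
            = sum4 (fun p => M i p * cofactor4 M n p) / det4 M)
    by (unfold sum4, inv4; field; auto).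
  rewrite E, cof_id by auto. destruct (Nat.eqb i n); field; auto.
Qed.

Lemma Minv_id M b i : det4 M <> 0 -> (i<4)%nat ->
  sum4 (fun m => M i m * sum4 (fun n => inv4 M m n * b n)) = b i.
Proof.
  intros Hd Hi.
  transitivity (sum4 (fun n => sum4 (fun m => M i m * inv4 M m n) * b n)).
  { unfold sum4; ring. }
  unfold sum4 at 1. cbv beta.
  rewrite !inv_id by (auto; lia).
  destruct i as [|[|[|[|i]]]]; try lia; simpl; ring.
Qed.

Definition pp (u : nat -> R) i := if Rle_dec 0 (u i) then prv i else nxt i.

Lemma rowA u i y : (i<4)%nat ->
  sum4 (fun m => matA u i m * y m) = y i - omegaV u i * y (pp u i).
Proof.
  intros Hi. destruct i as [|[|[|[|i]]]]; try lia;
  unfold sum4, matA, pp; simpl; destruct (Rle_dec 0 (u _)); unfold prv, nxt; simpl; ring.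
Qed.

Lemma phi_bounds r : 0 <= r -> 0 <= phi r /\ phi r < 1 /\ phi r <= r.
Proof.
  intros Hr. unfold phi.
  set (N := r ^ 4 + r ^ 3 + r ^ 2 + r).
  assert (HN : 0 <= N) by (unfold N; simpl; nra).
  assert (HD : 0 < N + 1) by lra.
  assert (E : N / (N + 1) * (N + 1) = N) by (field; lra).
  assert (Hi : 0 < / (N + 1)) by (apply Rinv_0_lt_compat; lra).
  split; [|split].
  - unfold Rdiv; nra.
  - apply Rmult_lt_reg_r with (N + 1); [lra|]. rewrite E. lra.
  - apply Rmult_le_reg_r with (N + 1); [lra|]. rewrite E.
    unfold N; simpl. assert (0 <= r*r*r*r*r) by (repeat apply Rmult_le_pos; lra). nra.
Qed.

Lemma phi0 : phi 0 = 0.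
Proof. unfold phi; simpl. field. Qed.

Lemma omega_bounds u i : 0 <= omegaV u i < 1.
Proof.
  unfold omegaV.
  destruct (Rlt_dec 0 (u i)); [|destruct (Rlt_dec (u i) 0)]; try lra;
  match goal with |- context [phi (Rmax 0 ?x)] =>
    destruct (phi_bounds (Rmax 0 x) (Rmax_l 0 x)) as [? [? ?]] end; lra.
Qed.

Lemma matB_nonneg u i j : 0 <= matB u i j.
Proof.
  pose proof (omega_bounds u i). unfold matB.
  destruct (Rle_dec 0 (u i)); repeat match goal with |- context[if ?b then _ else _] => destruct b end; lra.
Qed.

Lemma deriv_nonneg f x d : (forall a b, a <= b -> f a <= f b) ->
  derivable_pt_lim f x d -> 0 <= d.
Proof.
  intros Hm Hd. destruct (Rle_or_lt 0 d) as [|Hneg]; auto. exfalso.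
  destruct (Hd (-d/2)) as [del Hdel]; [lra|].
  pose proof (cond_pos del) as Hdp.
  assert (Hh : del/2 <> 0) by lra.
  assert (Ha : Rabs (del/2) < del) by (rewrite Rabs_right; lra).
  specialize (Hdel _ Hh Ha).
  assert (Hq : 0 <= (f (x + del/2) - f x) / (del/2)).
  { pose proof (Hm x (x + del/2) ltac:(lra)).
    unfold Rdiv. apply Rmult_le_pos; [lra|]. left; apply Rinv_0_lt_compat; lra. }
  pose proof (Rle_abs ((f (x + del / 2) - f x) / (del / 2) - d)). lra.
Qed.

Lemma minprin (y om : nat -> R) (p : nat -> nat) :
  (forall i, (i < 4)%nat -> (p i < 4)%nat) ->
  (forall i, 0 <= om i < 1) ->
  (forall i, (i < 4)%nat -> om i * y (p i) <= y i) ->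
  forall i, (i < 4)%nat -> 0 <= y i.
Proof.
  intros Hp Ho Hr.
  set (mu := Rmin (Rmin (y 0%nat) (y 1%nat)) (Rmin (y 2%nat) (y 3%nat))).
  assert (Hle : forall i, (i < 4)%nat -> mu <= y i).
  { intros i Hi. unfold mu.
    pose proof (Rmin_l (Rmin (y 0%nat) (y 1%nat)) (Rmin (y 2%nat) (y 3%nat))).
    pose proof (Rmin_r (Rmin (y 0%nat) (y 1%nat)) (Rmin (y 2%nat) (y 3%nat))).
    pose proof (Rmin_l (y 0%nat) (y 1%nat)). pose proof (Rmin_r (y 0%nat) (y 1%nat)).
    pose proof (Rmin_l (y 2%nat) (y 3%nat)). pose proof (Rmin_r (y 2%nat) (y 3%nat)).
    destruct i as [|[|[|[|i]]]]; try lia; lra. }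
  assert (Hex : exists m, (m < 4)%nat /\ y m = mu).
  { unfold mu, Rmin.
    destruct (Rle_dec (y 0%nat) (y 1%nat)); destruct (Rle_dec (y 2%nat) (y 3%nat));
    match goal with |- exists m, _ /\ _ = (if Rle_dec ?a ?b then ?a else ?b) =>
      destruct (Rle_dec a b) end;
    first [ exists 0%nat; split; [lia|reflexivity]
          | exists 1%nat; split; [lia|reflexivity]
          | exists 2%nat; split; [lia|reflexivity]
          | exists 3%nat; split; [lia|reflexivity]]. }
  destruct Hex as [m [Hm Hym]].
  assert (H0 : 0 <= mu).
  { pose proof (Hr m Hm). pose proof (Hle (p m) (Hp m Hm)). pose proof (Ho m). nra. }
  intros i Hi. pose proof (Hle i Hi). lra.
Qed.

Lemma sign_lemma uk uk' wk wk' yk yk' :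
 0 <= yk -> 0 <= yk' -> 0 <= wk -> 0 <= wk' ->
 (0 <= uk -> yk = wk*yk') ->
 (uk' < 0 -> yk' = wk' * yk) ->
 (0 < uk -> 0 < uk' -> wk*uk <= uk') ->
 (0 <= uk -> uk' <= 0 -> wk = 0) ->
 (uk < 0 -> uk' < 0 -> uk <= wk' * uk') ->
 uk*yk - uk'*yk' <= 0.
Proof.
  intros H1 H2 H3 H4 R1 R2 C1 C2 C3.
  destruct (Rlt_or_le uk 0) as [Ha|Ha]; destruct (Rlt_or_le uk' 0) as [Hb|Hb].
  - rewrite (R2 Hb). specialize (C3 Ha Hb). nra.
  - nra.
  - rewrite (R2 Hb). rewrite (R1 Ha). rewrite (C2 Ha (Rlt_le _ _ Hb)). nra.
  - destruct (Req_dec uk 0) as [E|E].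
    + subst. nra.
    + destruct (Req_dec uk' 0) as [E'|E'].
      * rewrite (R1 Ha), (C2 Ha (Req_le _ _ E')). subst. nra.
      * rewrite (R1 Ha). specialize (C1 ltac:(lra) ltac:(lra)). nra.
Qed.

Definition ycol u j i := sum4 (fun n => inv4 (matA u) i n * matB u n j).
Definition Kf u lw lnw l S j i :=
  sum4 (fun a => inv4 (matA u) i a *
    sum4 (fun m => matB u a m * (if Nat.eqb m j then 0 else chi lw lnw l S m))) * u i.

Lemma lin_lemma u lw lnw l S j i s : (j < 4)%nat ->
  Vbar u lw lnw l (upd S j s) i =
  Kf u lw lnw l S j i + (mob lw lnw l s / (lw s + lnw s)) * ycol u j i * u i.
Proof.
  intros Hj. unfold Vbar, chibar, Kf, ycol.
  generalize (inv4 (matA u)) as IA. generalize (matB u) as MB. intros.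
  unfold chi, upd, sum4.
  destruct j as [|[|[|[|j]]]]; try lia; simpl; ring.
Qed.

Lemma g_deriv (lw lnw : R -> R)
  (hlw_pos : forall s, 0 < lw s) (hlnw_pos : forall s, 0 < lnw s)
  (hlw_der : forall s, exists d, derivable_pt_lim lw s d)
  (hlnw_der : forall s, exists d, derivable_pt_lim lnw s d)
  (hlw_mono : forall x y, x <= y -> lw x <= lw y)
  (hlnw_mono : forall x y, x <= y -> lnw y <= lnw x) l x0 :
  exists D, derivable_pt_lim
    (fun x => mob lw lnw l (wet_of l x) / (lw (wet_of l x) + lnw (wet_of l x))) x0 D
    /\ 0 <= D.
Proof.
  set (s0 := wet_of l x0).
  destruct (hlw_der s0) as [dw Hw]. destruct (hlnw_der s0) as [dn Hn].
  assert (Hdw : 0 <= dw) by (exact (deriv_nonneg _ _ _ hlw_mono Hw)).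
  assert (Hdn : 0 <= - dn).
  { apply (deriv_nonneg (fun x => - lnw x) s0).
    - intros a b Hab. pose proof (hlnw_mono a b Hab). lra.
    - exact (derivable_pt_lim_opp _ _ _ Hn). }
  assert (HL : derivable_pt_lim (fun s => lw s + lnw s) s0 (dw + dn))
    by exact (derivable_pt_lim_plus _ _ _ _ _ Hw Hn).
  assert (Hne : (fun s => lw s + lnw s) s0 <> 0)
    by (pose proof (hlw_pos s0); pose proof (hlnw_pos s0); simpl; lra).
  pose proof (hlw_pos s0). pose proof (hlnw_pos s0).
  assert (Hsq : 0 < / (lw s0 + lnw s0)²)
    by (apply Rinv_0_lt_compat; unfold Rsqr; nra).
  destruct l; simpl in s0 |- *.
  - exists ((dw * (lw s0 + lnw s0) - (dw + dn) * lw s0) / (lw s0 + lnw s0)²).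
    split.
    + exact (derivable_pt_lim_div lw (fun s => lw s + lnw s) x0 dw (dw + dn) Hw HL Hne).
    + unfold Rdiv. apply Rmult_le_pos; [nra | lra].
  - assert (Hh : derivable_pt_lim (fun s => lnw s / (lw s + lnw s)) s0
       ((dn * (lw s0 + lnw s0) - (dw + dn) * lnw s0) / (lw s0 + lnw s0)²))
      by exact (derivable_pt_lim_div lnw (fun s => lw s + lnw s) s0 dn (dw + dn) Hn HL Hne).
    assert (H1 : derivable_pt_lim (fun x => 1 - x) x0 (0 - 1))
      by exact (derivable_pt_lim_minus _ _ _ _ _ (derivable_pt_lim_const 1 x0) (derivable_pt_lim_id x0)).
    exists (((dn * (lw s0 + lnw s0) - (dw + dn) * lnw s0) / (lw s0 + lnw s0)²) * (0 - 1)).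
    split.
    + exact (derivable_pt_lim_comp (fun x => 1 - x) (fun s => lnw s / (lw s + lnw s)) x0 _ _ H1 Hh).
    + assert (0 <= (dw * lnw s0 - dn * lw s0) * / (lw s0 + lnw s0)²)
        by (apply Rmult_le_pos; nra).
      unfold Rdiv. nra.
Qed.

Lemma dpl_ext f g x d : (forall y, f y = g y) ->
  derivable_pt_lim f x d -> derivable_pt_lim g x d.
Proof.
  intros H Hd eps He. destruct (Hd eps He) as [del Hdel]. exists del.
  intros h Hh Ha. rewrite <- !H. auto.
Qed.

Theorem mainTheorem4
  (u : nat -> R) (lw lnw : R -> R)
  (hlw_pos : forall s, 0 < lw s) (hlnw_pos : forall s, 0 < lnw s)
  (hlw_der : forall s, exists d, derivable_pt_lim lw s d)
  (hlnw_der : forall s, exists d, derivable_pt_lim lnw s d)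
  (hlw_mono : forall x y, x <= y -> lw x <= lw y)
  (hlnw_mono : forall x y, x <= y -> lnw y <= lnw x)
  (l : phase) (k j : nat) (hk : (k < 4)%nat) (hj : (j < 4)%nat) (hjk : j <> k)
  (S : nat -> R) :
  exists d : R,
    derivable_pt_lim
      (fun x => Vbar u lw lnw l (upd S j (wet_of l x)) k
              - Vbar u lw lnw l (upd S j (wet_of l x)) (prv k))
      (phase_sat l (S j)) d
    /\ d <= 0.
Proof.
  destruct (g_deriv lw lnw hlw_pos hlnw_pos hlw_der hlnw_der hlw_mono hlnw_mono l
              (phase_sat l (S j))) as [D [HD HD0]].
  assert (Hk'4 : (prv k < 4)%nat) by (unfold prv; apply Nat.mod_upper_bound; lia).
  assert (Hnp : nxt (prv k) = k)
    by (destruct k as [|[|[|[|k]]]]; try lia; reflexivity).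
  set (k' := prv k) in *.
  set (y := ycol u j).
  assert (Hc : u k * y k - u k' * y k' <= 0).
  { destruct (Req_dec (det4 (matA u)) 0) as [Hd0|Hd].
    - assert (Hy0 : forall i, y i = 0)
        by (intro i; unfold y, ycol, inv4, Rdiv, sum4; rewrite Hd0, Rinv_0; ring).
      rewrite !Hy0. lra.
    - assert (Hrow : forall i, (i < 4)%nat ->
                y i - omegaV u i * y (pp u i) = matB u i j).
      { intros i Hi. unfold y. rewrite <- (rowA u i (ycol u j)) by auto.
        unfold ycol. exact (Minv_id (matA u) (fun n => matB u n j) i Hd Hi). }
      assert (Hnn : forall i, (i < 4)%nat -> 0 <= y i).
      { apply (minprin y (omegaV u) (pp u)).
        - intros i Hi. unfold pp, prv, nxt.
          destruct (Rle_dec 0 (u i)); apply Nat.mod_upper_bound; lia.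
        - apply omega_bounds.
        - intros i Hi. pose proof (Hrow i Hi). pose proof (matB_nonneg u i j). lra. }
      apply (sign_lemma (u k) (u k') (omegaV u k) (omegaV u k') (y k) (y k')).
      + auto.
      + auto.
      + apply omega_bounds.
      + apply omega_bounds.
      + intros H. pose proof (Hrow k hk) as Rk. unfold pp, matB in Rk.
        destruct (Rle_dec 0 (u k)); [|lra].
        rewrite (proj2 (Nat.eqb_neq j k) hjk) in Rk. fold k' in Rk. lra.
      + intros H. pose proof (Hrow k' Hk'4) as Rk. unfold pp, matB in Rk.
        destruct (Rle_dec 0 (u k')); [lra|]. rewrite Hnp in Rk.
        rewrite (proj2 (Nat.eqb_neq j k) hjk) in Rk. fold k' in Rk. lra.
      + intros H1 H2. unfold omegaV. destruct (Rlt_dec 0 (u k)); [|lra].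
        fold k'.
        assert (Hi : 0 < / u k) by (apply Rinv_0_lt_compat; lra).
        assert (Hr : 0 <= u k' / u k) by (unfold Rdiv; nra).
        rewrite Rmax_right by lra.
        destruct (phi_bounds _ Hr) as [_ [_ Hp]].
        assert (E : u k' / u k * u k = u k') by (field; lra). nra.
      + intros H1 H2. unfold omegaV. destruct (Rlt_dec 0 (u k)).
        * fold k'.
          assert (Hi : 0 < / u k) by (apply Rinv_0_lt_compat; lra).
          assert (Hr : u k' / u k <= 0) by (unfold Rdiv; nra).
          rewrite Rmax_left by lra. apply phi0.
        * destruct (Rlt_dec (u k) 0); [lra|reflexivity].
      + intros H1 H2. unfold omegaV. destruct (Rlt_dec 0 (u k')); [lra|].
        destruct (Rlt_dec (u k') 0); [|lra]. rewrite Hnp.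
        assert (Hi : / u k' < 0) by (apply Rinv_lt_0_compat; lra).
        assert (Hr : 0 <= u k / u k') by (unfold Rdiv; nra).
        rewrite Rmax_right by lra.
        destruct (phi_bounds _ Hr) as [_ [_ Hp]].
        assert (E : u k / u k' * u k' = u k) by (field; lra). nra. }
  set (g := fun x => mob lw lnw l (wet_of l x) / (lw (wet_of l x) + lnw (wet_of l x))) in HD.
  set (c := y k * u k - y k' * u k').
  set (K0 := Kf u lw lnw l S j k - Kf u lw lnw l S j k').
  exists (c * D). split.
  - apply dpl_ext with (fun x => K0 + c * g x).
    { intro x. unfold K0, c, g, y. rewrite !lin_lemma by lia. ring. }
    replace (c * D) with (0 + c * D) by ring.
    apply (derivable_pt_lim_plus (fun _ => K0) (fun x => c * g x)).
    + apply derivable_pt_lim_const.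
    + apply (derivable_pt_lim_scal g c). exact HD.
  - unfold c. nra.
Qed.
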